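(* Let $\psi$ be a formula of the positive Boolean closure $\mathcal B^+(\mathrm{HyperLTL})$. Then there exists a HyperLTL formula $\psi^*$ in prenex form that is equivalent to $\psi$ (i.e. $\llbracket\psi^*\rrbracket_T(\Pi)=\llbracket\psi\rrbracket_T(\Pi)$ for every non-empty set of traces $T$ and every trace assignment $\Pi$ defined on the free variables), such that $\alpha(\psi^* )\le\alpha(\psi)+1$ and $\psi^*$ contains the same number of existential quantifiers and the same number of universal quantifiers as $\psi$.
   Context: Fix a finite set $\mathrm{AP}$ of atomic propositions and an infinite set $\mathcal V$ of trace variables. A trace is an infinite sequence $t=t[0]t[1]\cdots$ with $t[i]\in[0,1]^{\mathrm{AP}}$; $t[i,\infty]$ is its suffix from position $i$. A trace assignment $\Pi$ is a partial map from $\mathcal V$ to traces; $\Pi[i,\infty]$ is $\pi\mapsto\Pi(\pi)[i,\infty]$, $\Pi[\pi\mapsto t]$ is $\Pi$ updated at $\pi$. $\mathcal B^+(\mathrm{HyperLTL})$ is given by the grammar $\psi::=\exists\pi\,\psi\mid\forall\pi\,\psi\mid\psi\vee\psi\mid\psi\wedge\psi\mid\phi$, $\phi::=p_\pi\mid\neg\phi\mid\phi\vee\phi\mid X\phi\mid\phi U\phi$ ($p\in\mathrm{AP}$, $\pi\in\mathcal V$). Semantics for non-empty $T$: $\llbracket p_\pi\rrbracket_T(\Pi)=\Pi(\pi)[0](p)$, $\llbracket\neg\phi\rrbracket=1-\llbracket\phi\rrbracket$, $\vee$ is $\max$, $\wedge$ is $\min$, $\llbracket X\phi\rrbracket_T(\Pi)=\llbracket\phi\rrbracket_T(\Pi[1,\infty])$,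 $\llbracket\phi_1U\phi_2\rrbracket_T(\Pi)=\sup_{i\ge0}\min\big(\llbracket\phi_2\rrbracket_T(\Pi[i,\infty]),\min_{0\le j<i}\llbracket\phi_1\rrbracket_T(\Pi[j,\infty])\big)$, $\llbracket\forall\pi\,\psi\rrbracket_T(\Pi)=\inf_{t\in T}\llbracket\psi\rrbracket_T(\Pi[\pi\mapsto t])$, $\llbracket\exists\pi\,\psi\rrbracket_T(\Pi)=\sup_{t\in T}\llbracket\psi\rrbracket_T(\Pi[\pi\mapsto t])$. HyperLTL is the fragment of formulas in prenex form: a sequence of quantifiers followed by a quantifier-free formula $\phi$. The alternation depth $\alpha(\psi)$ is the maximal number of alternations between existential and universal quantifiers (in either direction) along a branch of the syntax tree of $\psi$. *)

(* Defs.v *)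
From HB Require Import structures.
From mathcomp Require Import all_boot all_order all_algebra.
From mathcomp Require Import boolp classical_sets reals.
Set Implicit Arguments. Unset Strict Implicit. Unset Printing Implicit Defensive.
Import Order.TTheory GRing.Theory Num.Theory.
Local Open Scope classical_set_scope.
Local Open Scope ring_scope.

Section Syntax.
Variables (AP : finType) (V : eqType).

Inductive qf : Type :=
| QAtom : AP -> V -> qf
| QNeg : qf -> qf
| QOr : qf -> qf -> qf
| QNext : qf -> qf
| QUntil : qf -> qf -> qf.

Inductive bform : Type :=
| BEx : V -> bform -> bform
| BAll : V -> bform -> bform
| BOr : bform -> bform -> bform
| BAnd : bform -> bform -> bform
| BQF : qf -> bform.

(* HyperLTL = prenex form: quantifier prefix followed by a qf formula *)
Fixpoint prenex (f : bform) : bool :=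
  match f with
  | BEx _ g | BAll _ g => prenex g
  | BQF _ => true
  | _ => false
  end.

Fixpoint fv_qf (p : qf) : seq V :=
  match p with
  | QAtom _ x => [:: x]
  | QNeg p1 | QNext p1 => fv_qf p1
  | QOr p1 p2 | QUntil p1 p2 => fv_qf p1 ++ fv_qf p2
  end.

Fixpoint fv (f : bform) : seq V :=
  match f with
  | BEx x g | BAll x g => [seq y <- fv g | y != x]
  | BOr g h | BAnd g h => fv g ++ fv h
  | BQF p => fv_qf p
  end.

Fixpoint num_ex (f : bform) : nat :=
  match f with
  | BEx _ g => (num_ex g).+1
  | BAll _ g => num_ex g
  | BOr g h | BAnd g h => num_ex g + num_ex h
  | BQF _ => 0
  end.

Fixpoint num_all (f : bform) : nat :=
  match f with
  | BEx _ g => num_all g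
  | BAll _ g => (num_all g).+1
  | BOr g h | BAnd g h => num_all g + num_all h
  | BQF _ => 0
  end.

(* alternations along branches; [last] = kind of the last quantifier met on
   the branch so far (Some true = exists, Some false = forall). *)
Fixpoint alt_from (last : option bool) (f : bform) : nat :=
  match f with
  | BEx _ g => (last == Some false) + alt_from (Some true) g
  | BAll _ g => (last == Some true) + alt_from (Some false) g
  | BOr g h | BAnd g h => maxn (alt_from last g) (alt_from last h)
  | BQF _ => 0
  end.

Definition alt_depth (f : bform) : nat := alt_from None f.

End Syntax.

Section Semantics.
Variables (AP : finType) (V : eqType) (R : realType).

Definition trace := nat -> AP -> R.
Definition is_trace (t : trace) : Prop := forall i p, 0 <= t i p <= 1.

Definition assignment := V -> option trace.

Definition suffix (t : trace) (i : nat) : trace := fun n => t (i + n)%N.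
Definition asuffix (Pi : assignment) (i : nat) : assignment :=
  fun x => omap (fun t => suffix t i) (Pi x).
Definition aupdate (Pi : assignment) (x : V) (t : trace) : assignment :=
  fun y => if y == x then Some t else Pi y.

(* value of p_x; Pi is only ever used on its domain (free variables) *)
Definition atom_val (Pi : assignment) (p : AP) (x : V) : R :=
  match Pi x with Some t => t 0%N p | None => 0 end.

Fixpoint eval_qf (phi : qf AP V) (Pi : assignment) : R :=
  match phi with
  | QAtom p x => atom_val Pi p x
  | QNeg p1 => 1 - eval_qf p1 Pi
  | QOr p1 p2 => Num.max (eval_qf p1 Pi) (eval_qf p2 Pi)
  | QNext p1 => eval_qf p1 (asuffix Pi 1)
  | QUntil p1 p2 =>
      sup (range (fun i : nat =>
        Num.min (eval_qf p2 (asuffix Pi i))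
                (\big[Num.min/1]_(j < i) eval_qf p1 (asuffix Pi j))))
  end.

Fixpoint eval (T : set trace) (f : bform AP V) (Pi : assignment) : R :=
  match f with
  | BEx x g => sup [set eval T g (aupdate Pi x t) | t in T]
  | BAll x g => inf [set eval T g (aupdate Pi x t) | t in T]
  | BOr g h => Num.max (eval T g Pi) (eval T h Pi)
  | BAnd g h => Num.min (eval T g Pi) (eval T h Pi)
  | BQF phi => eval_qf phi Pi
  end.

End Semantics.

Definition infinite_vars (V : eqType) : Prop := forall s : seq V, exists x, x \notin s.

(* Main.v *)
Require Import Defs.
From HB Require Import structures.
From mathcomp Require Import all_boot all_order all_algebra.
From mathcomp Require Import boolp classical_sets reals.
From mathcomp Require Import lra zify.
Set Implicit Arguments. Unset Strict Implicit. Unset Printing Implicit Defensive.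
Import Order.TTheory GRing.Theory Num.Theory.
Local Open Scope classical_set_scope.
Local Open Scope ring_scope.


Section Lat.
Variable R : realType.

Definition opR (o : bool) (a b : R) := if o then Num.max a b else Num.min a b.

Lemma opRC o a b : opR o a b = opR o b a.
Proof. by case: o; rewrite /opR; [rewrite maxC|rewrite minC]. Qed.

Lemma opR_mono o a b c d : a <= b -> c <= d -> opR o a c <= opR o b d.
Proof. by case: o => h1 h2; rewrite /opR; [apply: le_max2|apply: le_min2]. Qed.

Lemma opR01 o a b : 0 <= a <= 1 -> 0 <= b <= 1 -> 0 <= opR o a b <= 1.
Proof.
case: o => /andP[a0 a1] /andP[b0 b1]; rewrite /opR.
  by rewrite le_max a0 ge_max a1 b1.
by rewrite le_min a0 b0 ge_min a1.
Qed.

Lemma sup01 (T0 : Type) (A : set T0) (f : T0 -> R) :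
  A !=set0 -> (forall t, A t -> 0 <= f t <= 1) ->
  0 <= sup [set f t | t in A] <= 1.
Proof.
move=> [t0 At0] Hf.
have ub : has_ubound [set f t | t in A] by exists 1 => _ [t At <-]; case/andP: (Hf t At).
apply/andP; split.
  case/andP: (Hf t0 At0) => h _; apply: (le_trans h); apply: ub_le_sup => //; by exists t0.
apply: ge_sup; first by exists (f t0), t0.
by move=> _ [t At <-]; case/andP: (Hf t At).
Qed.

Lemma inf01 (T0 : Type) (A : set T0) (f : T0 -> R) :
  A !=set0 -> (forall t, A t -> 0 <= f t <= 1) ->
  0 <= inf [set f t | t in A] <= 1.
Proof.
move=> [t0 At0] Hf.
have lb : has_lbound [set f t | t in A] by exists 0 => _ [t At <-]; case/andP: (Hf t At).
apply/andP; split.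
  apply: lb_le_inf; first by exists (f t0), t0.
  by move=> _ [t At <-]; case/andP: (Hf t At).
case/andP: (Hf t0 At0) => _ h; apply: le_trans h; apply: ge_inf => //; by exists t0.
Qed.

Lemma sup_op (T0 : Type) (A : set T0) (f : T0 -> R) (c : R) o :
  A !=set0 -> (forall t, A t -> 0 <= f t <= 1) -> 0 <= c <= 1 ->
  sup [set opR o (f t) c | t in A] = opR o (sup [set f t | t in A]) c.
Proof.
move=> [t0 At0] Hf Hc.
have ubA : has_ubound [set f t | t in A] by exists 1 => _ [t At <-]; case/andP: (Hf t At).
have ubB : has_ubound [set opR o (f t) c | t in A].
  by exists 1 => _ [t At <-]; case/andP: (opR01 o (Hf t At) Hc).
have neB : [set opR o (f t) c | t in A] !=set0 by exists (opR o (f t0) c), t0.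
have neA : [set f t | t in A] !=set0 by exists (f t0), t0.
have fS t : A t -> f t <= sup [set f t | t in A] by move=> At; apply: ub_le_sup => //; exists t.
have bS t : A t -> opR o (f t) c <= sup [set opR o (f t) c | t in A].
  by move=> At; apply: ub_le_sup => //; exists t.
apply/eqP; rewrite eq_le; apply/andP; split.
  apply: ge_sup => // _ [t At <-]; apply: opR_mono => //; exact: fS.
case: o bS neB {ubB} => bS neB /=; rewrite /opR.
  rewrite ge_max; apply/andP; split.
    by apply: ge_sup => // _ [t At <-]; apply: le_trans (bS t At); rewrite le_max lexx.
  by apply: le_trans (bS t0 At0); rewrite le_max lexx orbT.
rewrite leNgt; apply/negP; rewrite lt_min => /andP[h1 h2].
have [_ [t At <-] ht] := sup_gt neA h1.
have := bS t At; rewrite /opR leNgt => /negP; apply.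
by rewrite lt_min ht h2.
Qed.

Lemma inf_op (T0 : Type) (A : set T0) (f : T0 -> R) (c : R) o :
  A !=set0 -> (forall t, A t -> 0 <= f t <= 1) -> 0 <= c <= 1 ->
  inf [set opR o (f t) c | t in A] = opR o (inf [set f t | t in A]) c.
Proof.
move=> [t0 At0] Hf Hc.
have lbA : has_lbound [set f t | t in A] by exists 0 => _ [t At <-]; case/andP: (Hf t At).
have lbB : has_lbound [set opR o (f t) c | t in A].
  by exists 0 => _ [t At <-]; case/andP: (opR01 o (Hf t At) Hc).
have neB : [set opR o (f t) c | t in A] !=set0 by exists (opR o (f t0) c), t0.
have neA : [set f t | t in A] !=set0 by exists (f t0), t0.
have fS t : A t -> inf [set f t | t in A] <= f t by move=> At; apply: ge_inf => //; exists t.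
have bS t : A t -> inf [set opR o (f t) c | t in A] <= opR o (f t) c.
  by move=> At; apply: ge_inf => //; exists t.
apply/eqP; rewrite eq_le; apply/andP; split; last first.
  apply: lb_le_inf => // _ [t At <-]; apply: opR_mono => //; exact: fS.
case: o bS neB {lbB} => bS neB /=; rewrite /opR; last first.
  rewrite le_min; apply/andP; split.
    by apply: lb_le_inf => // _ [t At <-]; apply: le_trans (bS t At) _; rewrite ge_min lexx.
  by apply: le_trans (bS t0 At0) _; rewrite ge_min lexx orbT.
rewrite leNgt; apply/negP; rewrite gt_max => /andP[h1 h2].
have [_ [t At <-] ht] := inf_lt neA h1.
have := bS t At; rewrite /opR leNgt => /negP; apply.
by rewrite gt_max ht h2.
Qed.

End Lat.


Section Sem.
Variables (AP : finType) (V : eqType) (R : realType).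

Definition aok (Pi : assignment AP V R) := forall x t, Pi x = Some t -> is_trace t.

Lemma aok_suffix Pi i : aok Pi -> aok (asuffix Pi i).
Proof.
move=> H x t; rewrite /asuffix; case E: (Pi x) => [t'|] //= [<-] j p.
exact: (H x t' E).
Qed.

Lemma aok_update Pi x t : aok Pi -> is_trace t -> aok (aupdate Pi x t).
Proof. by move=> H Ht y t'; rewrite /aupdate; case: eqP => _ ; [case=> <-|apply: H]. Qed.

Lemma eval_qf01 (phi : qf AP V) Pi : aok Pi -> 0 <= eval_qf phi Pi <= 1.
Proof.
elim: phi Pi => [p x|p IH|p1 IH1 p2 IH2|p IH|p1 IH1 p2 IH2] Pi HPi /=.
- rewrite /atom_val; case E: (Pi x) => [t|]; last by rewrite lexx ler01.
  exact: (HPi x t E).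
- by have := IH Pi HPi; move=> /andP[h1 h2]; apply/andP; split; lra.
- exact: (opR01 true (IH1 Pi HPi) (IH2 Pi HPi)).
- by apply: IH; apply: aok_suffix.
- pose g := fun i : nat => Num.min (eval_qf p2 (asuffix Pi i))
                (\big[Num.min/1]_(j < i) eval_qf p1 (asuffix Pi j)).
  apply: (@sup01 R nat setT g); first by exists 0%N.
  move=> i _; apply: (opR01 false); first by apply: IH2; apply: aok_suffix.
  elim/big_ind: _ => //; first by rewrite ler01 lexx.
    by move=> a b Ha Hb; apply: (opR01 false Ha Hb).
  by move=> j _; apply: IH1; apply: aok_suffix.
Qed.

Lemma eval01 (T : set (trace AP R)) (f : bform AP V) Pi :
  T !=set0 -> (forall t, T t -> is_trace t) -> aok Pi -> 0 <= eval T f Pi <= 1.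
Proof.
move=> T0 HT; elim: f Pi => [x g IH|x g IH|g IHg h IHh|g IHg h IHh|phi] Pi HPi /=.
- apply: sup01 => // t Tt; apply: IH; apply: aok_update => //; exact: HT.
- apply: inf01 => // t Tt; apply: IH; apply: aok_update => //; exact: HT.
- exact: (opR01 true (IHg Pi HPi) (IHh Pi HPi)).
- exact: (opR01 false (IHg Pi HPi) (IHh Pi HPi)).
- exact: eval_qf01.
Qed.

Lemma eval_qf_ext (phi : qf AP V) (Pi Pi' : assignment AP V R) :
  (forall z, z \in fv_qf phi -> Pi z = Pi' z) -> eval_qf phi Pi = eval_qf phi Pi'.
Proof.
elim: phi Pi Pi' => [p x|p IH|p1 IH1 p2 IH2|p IH|p1 IH1 p2 IH2] Pi Pi' H /=.
- by rewrite /atom_val H // mem_seq1.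
- by rewrite (IH Pi Pi').
- rewrite (IH1 Pi Pi') ?(IH2 Pi Pi') // => z zin; apply: H; by rewrite mem_cat zin ?orbT.
- by apply: IH => z zin; rewrite /asuffix H.
- have E1 i : eval_qf p1 (asuffix Pi i) = eval_qf p1 (asuffix Pi' i).
    by apply: IH1 => z zin; rewrite /asuffix H // mem_cat zin.
  have E2 i : eval_qf p2 (asuffix Pi i) = eval_qf p2 (asuffix Pi' i).
    by apply: IH2 => z zin; rewrite /asuffix H // mem_cat zin orbT.
  f_equal; f_equal; apply: funext => i; rewrite E2; congr Num.min.
  by apply: eq_bigr => j _; rewrite E1.
Qed.

Lemma eval_ext (T : set (trace AP R)) (f : bform AP V) (Pi Pi' : assignment AP V R) :
  (forall z, z \in fv f -> Pi z = Pi' z) -> eval T f Pi = eval T f Pi'.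
Proof.
elim: f Pi Pi' => [x g IH|x g IH|g IHg h IHh|g IHg h IHh|phi] Pi Pi' H /=.
- congr sup; apply: eq_imagel => t _; apply: IH => z zin; rewrite /aupdate.
  case: eqP => // /eqP ne; apply: H; by rewrite mem_filter ne zin.
- congr inf; apply: eq_imagel => t _; apply: IH => z zin; rewrite /aupdate.
  case: eqP => // /eqP ne; apply: H; by rewrite mem_filter ne zin.
- rewrite (IHg Pi Pi') ?(IHh Pi Pi') // => z zin; apply: H; by rewrite mem_cat zin ?orbT.
- rewrite (IHg Pi Pi') ?(IHh Pi Pi') // => z zin; apply: H; by rewrite mem_cat zin ?orbT.
- exact: eval_qf_ext.
Qed.

End Sem.


Section Syn.
Variables (AP : finType) (V : eqType).

Definition build (p : seq (bool * V)) (m : qf AP V) : bform AP V :=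
  foldr (fun qx f => if qx.1 then BEx qx.2 f else BAll qx.2 f) (BQF m) p.

Fixpoint cost (l : option bool) (p : seq (bool * V)) : nat :=
  match p with
  | [::] => 0
  | qx :: p' => (l == Some (~~ qx.1)) + cost (Some qx.1) p'
  end.

Lemma alt_build l p m : alt_from l (build p m) = cost l p.
Proof. by elim: p l => [|[[] x] p IH] l //=; rewrite IH. Qed.

Lemma prenex_build p m : prenex (build p m).
Proof. by elim: p => [|[[] x] p IH]. Qed.

Lemma num_ex_build p m : num_ex (build p m) = count fst p.
Proof. by elim: p => [|[[] x] p IH] //=; rewrite IH. Qed.

Lemma num_all_build p m : num_all (build p m) = count (fun qx => ~~ qx.1) p.
Proof. by elim: p => [|[[] x] p IH] //=; rewrite IH. Qed.

Lemma fv_build p m z : z \in fv (build p m) -> (z \in fv_qf m) && (z \notin map snd p).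
Proof.
elim: p => [|[q x] p IH] /=; first by move=> ->.
case: q => /=; rewrite mem_filter => /andP[zx /IH /andP[h1 h2]];
  by rewrite h1 in_cons negb_or zx h2.
Qed.

Lemma cost_None_le b p : (cost None p <= cost (Some b) p)%N.
Proof. by case: p => [|qx p] //=; rewrite leq_addl. Qed.

Lemma alt_Some_le b (f : bform AP V) : (alt_from (Some b) f <= (alt_from None f).+1)%N.
Proof.
elim: f b => [x g IH|x g IH|g IHg h IHh|g IHg h IHh|phi] b /=.
- have := IH true; lia.
- have := IH false; lia.
- have := IHg b; have := IHh b; lia.
- have := IHg b; have := IHh b; lia.
- by [].
Qed.

Fixpoint qf_ren (s : V -> V) (p : qf AP V) : qf AP V :=
  match p with
  | QAtom a x => QAtom a (s x)
  | QNeg p1 => QNeg (qf_ren s p1)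
  | QOr p1 p2 => QOr (qf_ren s p1) (qf_ren s p2)
  | QNext p1 => QNext (qf_ren s p1)
  | QUntil p1 p2 => QUntil (qf_ren s p1) (qf_ren s p2)
  end.

Lemma fv_qf_ren s p : fv_qf (qf_ren s p) = map s (fv_qf p).
Proof. by elim: p => //= [p1 -> p2 ->|p1 -> p2 ->]; rewrite map_cat. Qed.

Lemma eval_qf_ren (R : realType) s p (Pi : assignment AP V R) :
  eval_qf (qf_ren s p) Pi = eval_qf p (fun z => Pi (s z)).
Proof.
elim: p Pi => [a x|p IH|p1 IH1 p2 IH2|p IH|p1 IH1 p2 IH2] Pi //=.
- by rewrite IH.
- by rewrite IH1 IH2.
- f_equal; f_equal; apply: funext => i; rewrite IH2; congr Num.min.
  by apply: eq_bigr => j _; rewrite IH1.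
Qed.

Definition comb (o : bool) (m1 m2 : qf AP V) : qf AP V :=
  if o then QOr m1 m2 else QNeg (QOr (QNeg m1) (QNeg m2)).

Lemma fv_comb o m1 m2 : fv_qf (comb o m1 m2) = fv_qf m1 ++ fv_qf m2.
Proof. by case: o. Qed.

Lemma eval_comb (R : realType) o m1 m2 (Pi : assignment AP V R) :
  eval_qf (comb o m1 m2) Pi = opR o (eval_qf m1 Pi) (eval_qf m2 Pi).
Proof.
case: o => //=; rewrite /opR.
set a := eval_qf m1 Pi; set b := eval_qf m2 Pi.
have [ab|ba] := leP a b.
  have h : 1 - b <= 1 - a by lra.
  rewrite (max_idPl h); lra.
have h : 1 - a <= 1 - b by lra.
rewrite (max_idPr h); lra.
Qed.

Inductive shuffle {A : Type} : seq A -> seq A -> seq A -> Prop :=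
| sh_nil : shuffle [::] [::] [::]
| sh_l a s1 s2 s : shuffle s1 s2 s -> shuffle (a :: s1) s2 (a :: s)
| sh_r a s1 s2 s : shuffle s1 s2 s -> shuffle s1 (a :: s2) (a :: s).

Lemma shuffle_nil_l {A : Type} (s : seq A) : shuffle [::] s s.
Proof. by elim: s => [|a s IH]; constructor. Qed.

Lemma shuffle_nil_r {A : Type} (s : seq A) : shuffle s [::] s.
Proof. by elim: s => [|a s IH]; constructor. Qed.

Lemma shuffle_perm {A : eqType} (s1 s2 s : seq A) : shuffle s1 s2 s -> perm_eq s (s1 ++ s2).
Proof.
elim => //= [a t1 t2 t _ IH|a t1 t2 t _ IH]; first by rewrite perm_cons.
have -> : t1 ++ a :: t2 = t1 ++ [:: a] ++ t2 by [].
by rewrite perm_sym perm_catCA /= perm_cons perm_sym.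
Qed.

Lemma cost_cons b q x p : cost (Some b) ((q, x) :: p) = ((q != b) + cost (Some q) p)%N.
Proof. by case: b; case: q. Qed.

Lemma eqSN b q : (Some b == Some (~~ q)) = (q != b).
Proof. by case: b; case: q. Qed.

Lemma merge_exists n b (w1 w2 : seq (bool * V)) : (size w1 + size w2 <= n)%N ->
  exists w, shuffle w1 w2 w /\
    (cost (Some b) w <= maxn (cost (Some b) w1) (cost (Some b) w2))%N.
Proof.
elim: n b w1 w2 => [|n IH] b [|[q1 x1] w1] [|[q2 x2] w2] //= Hs.
- by exists [::]; split => //; constructor.
- by exists [::]; split => //; constructor.
- by exists ((q2, x2) :: w2); split; [apply: shuffle_nil_l|rewrite max0n].
- by exists ((q1, x1) :: w1); split; [apply: shuffle_nil_r|rewrite maxn0].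
- have Hs1 : (size w1 + size ((q2, x2) :: w2) <= n)%N by move: Hs => /=; lia.
  have Hs2 : (size ((q1, x1) :: w1) + size w2 <= n)%N by move: Hs => /=; lia.
  have [e1|ne1] := eqVneq q1 b.
    have [w [Hw Hc]] := IH b w1 ((q2, x2) :: w2) Hs1.
    exists ((q1, x1) :: w); split; first by constructor.
    move: Hc; rewrite /= ?cost_cons ?eqSN e1 ?eqxx /= !add0n; lia.
  have [e2|ne2] := eqVneq q2 b.
    have [w [Hw Hc]] := IH b ((q1, x1) :: w1) w2 Hs2.
    exists ((q2, x2) :: w); split; first by constructor.
    move: Hc; rewrite /= ?cost_cons ?eqSN e2 ?eqxx /= !add0n; lia.
  have [w [Hw Hc]] := IH q1 w1 ((q2, x2) :: w2) Hs1.
  exists ((q1, x1) :: w); split; first by constructor.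
  have e : q2 = q1 by destruct q1, q2, b.
  subst q2; move: Hc; rewrite /= ?cost_cons ?eqSN ne1 ?eqxx /= ?add0n; lia.
Qed.

End Syn.


Section Main.
Variables (AP : finType) (V : eqType).

Definition Qop (R : realType) (q : bool) (E : set R) : R := if q then sup E else inf E.

Definition qform (q : bool) (x : V) (g : bform AP V) : bform AP V :=
  if q then BEx x g else BAll x g.

Lemma eval_qform (R : realType) (T : set (trace AP R)) q x g Pi :
  eval T (qform q x g) Pi = Qop q [set eval T g (aupdate Pi x t) | t in T].
Proof. by case: q. Qed.

Lemma build_cons q x p (m : qf AP V) : build ((q, x) :: p) m = qform q x (build p m).
Proof. by []. Qed.

Lemma Qop_op (R : realType) (T0 : Type) (A : set T0) (f : T0 -> R) c o q :
  A !=set0 -> (forall t, A t -> 0 <= f t <= 1) -> 0 <= c <= 1 ->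
  Qop q [set opR o (f t) c | t in A] = opR o (Qop q [set f t | t in A]) c.
Proof. by case: q => /= *; [apply: sup_op|apply: inf_op]. Qed.

Lemma eval_shuffle (R : realType) (T : set (trace AP R)) o (p1 p2 w : seq (bool * V)) m1 m2 :
  shuffle p1 p2 w -> T !=set0 -> (forall t, T t -> is_trace t) ->
  (forall y, y \in map snd p1 -> (y \notin fv_qf m2) && (y \notin map snd p2)) ->
  (forall y, y \in map snd p2 -> y \notin fv_qf m1) ->
  forall Pi, aok Pi ->
  eval T (build w (comb o m1 m2)) Pi = opR o (eval T (build p1 m1) Pi) (eval T (build p2 m2) Pi).
Proof.
move=> Hsh T0 HT; elim: Hsh => [|[q x] s1 s2 s Hs IH|[q x] s1 s2 s Hs IH] H1 H2 Pi HPi.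
- by rewrite /= eval_comb.
- rewrite !build_cons !eval_qform.
  have /andP[Hx _] := H1 x (mem_head _ _).
  have H1' y : y \in map snd s1 -> (y \notin fv_qf m2) && (y \notin map snd s2).
    by move=> yin; apply: H1; rewrite /= in_cons yin orbT.
  have ind : forall t, T t -> eval T (build s (comb o m1 m2)) (aupdate Pi x t) =
      opR o (eval T (build s1 m1) (aupdate Pi x t)) (eval T (build s2 m2) Pi).
    move=> t Tt; rewrite IH //; last by apply: aok_update => //; apply: HT.
    congr opR; apply: eval_ext => z /fv_build /andP[zin _]; rewrite /aupdate.
    by case: eqP => // zx; subst z; rewrite zin in Hx.
  rewrite (eq_imagel ind) Qop_op //.
    by move=> t Tt; apply: eval01 => //; apply: aok_update => //; apply: HT.
  exact: eval01.
- rewrite !build_cons !eval_qform.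
  have Hx := H2 x (mem_head _ _).
  have H1' y : y \in map snd s1 -> (y \notin fv_qf m2) && (y \notin map snd s2).
    move=> yin; have /andP[-> h] := H1 y yin; move: h; rewrite /= in_cons negb_or.
    by case/andP.
  have H2' y : y \in map snd s2 -> y \notin fv_qf m1.
    by move=> yin; apply: H2; rewrite /= in_cons yin orbT.
  have ind : forall t, T t -> eval T (build s (comb o m1 m2)) (aupdate Pi x t) =
      opR o (eval T (build s2 m2) (aupdate Pi x t)) (eval T (build s1 m1) Pi).
    move=> t Tt; rewrite IH //; last by apply: aok_update => //; apply: HT.
    rewrite opRC; congr opR; apply: eval_ext => z /fv_build /andP[zin _]; rewrite /aupdate.
    by case: eqP => // zx; subst z; rewrite zin in Hx.
  rewrite (eq_imagel ind) Qop_op //; first by rewrite opRC.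
    by move=> t Tt; apply: eval01 => //; apply: aok_update => //; apply: HT.
  exact: eval01.
Qed.

End Main.


Section Conv.
Variables (AP : finType) (V : eqType).

Definition Good (psi : bform AP V) (b : bool) (sg : V -> V) (S A : seq V)
    (p : seq (bool * V)) (m : qf AP V) : Prop :=
  [/\ forall y, y \in map snd p -> y \notin S ++ A,
      uniq (map snd p),
      forall y, y \in fv_qf m -> (y \in map snd p) || (y \in S) &
      (cost (Some b) p <= alt_from (Some b) psi)%N] /\
  [/\ count fst p = num_ex psi,
      count (fun qx => ~~ qx.1) p = num_all psi &
      forall (R : realType) (T : set (trace AP R)) (Pi : assignment AP V R),
        T !=set0 -> (forall t, T t -> is_trace t) -> aok Pi ->
        eval T (build p m) Pi = eval T psi (fun z => Pi (sg z))].

Definition Pre (psi : bform AP V) (sg : V -> V) (S : seq V) :=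
  forall z, z \in fv psi -> sg z \in S.

Lemma conv_quant (HV : infinite_vars V) q x g :
  (forall b sg S A, Pre g sg S -> exists p m, Good g b sg S A p m) ->
  forall b sg S A, Pre (qform q x g) sg S -> exists p m, Good (qform q x g) b sg S A p m.
Proof.
move=> IH b sg S A Hpre.
have [y Hy] := HV (S ++ A).
pose sg' := fun z => if z == x then y else sg z.
have Hpre' : Pre g sg' (y :: S).
  move=> z zin; rewrite /sg'; case: eqP => [_|/eqP zx]; first exact: mem_head.
  rewrite in_cons Hpre ?orbT //; by case: (q) => /=; rewrite mem_filter zx zin.
have [p [m [[F U FV C] [NE NA EV]]]] := IH q sg' (y :: S) A Hpre'.
have yp : y \notin map snd p.
  by apply/negP => /F; rewrite /= in_cons eqxx.
exists ((q, y) :: p), m; split; split.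
- move=> y'; rewrite /= in_cons => /orP[/eqP -> //|/F].
  by rewrite /= in_cons negb_or => /andP[].
- by rewrite /= yp U.
- move=> z /FV; rewrite /= !in_cons => /orP[h|/orP[h|h]]; by rewrite h ?orbT ?orTb.
- by move: C; case: (q) => /=; case: (b) => /=; lia.
- by move: NE; case: (q) => /= ->.
- by move: NA; case: (q) => /= ->.
- move=> R T Pi T0 HT HPi; rewrite build_cons !eval_qform.
  congr Qop; apply: eq_imagel => t Tt; rewrite EV //; last first.
    by apply: aok_update => //; apply: HT.
  apply: eval_ext => z zin; rewrite /sg' /aupdate.
  case: (eqVneq z x) => [_|zx]; first by rewrite eqxx.
  have Sz : sg z \in S by apply: Hpre; case: (q) => /=; rewrite mem_filter zx zin.
  have -> : (sg z == y) = false.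
    by apply/negP => /eqP e; move: Hy; rewrite mem_cat -e Sz.
  by [].  
Qed.

End Conv.


Section Conv2.
Variables (AP : finType) (V : eqType).

Definition bin (o : bool) (g h : bform AP V) : bform AP V := if o then BOr g h else BAnd g h.

Lemma conv_bin o g h :
  (forall b sg S A, Pre g sg S -> exists p m, Good g b sg S A p m) ->
  (forall b sg S A, Pre h sg S -> exists p m, Good h b sg S A p m) ->
  forall b sg S A, Pre (bin o g h) sg S -> exists p m, Good (bin o g h) b sg S A p m.
Proof.
move=> IHg IHh b sg S A Hpre.
have fvb : fv (bin o g h) = fv g ++ fv h by case: (o).
have Hg : Pre g sg S by move=> z zin; apply: Hpre; rewrite fvb mem_cat zin.
have Hh : Pre h sg S by move=> z zin; apply: Hpre; rewrite fvb mem_cat zin orbT.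
have [p1 [m1 [[F1 U1 FV1 C1] [NE1 NA1 EV1]]]] := IHg b sg S A Hg.
have [p2 [m2 [[F2 U2 FV2 C2] [NE2 NA2 EV2]]]] := IHh b sg S (A ++ map snd p1) Hh.
have [w [Hw Cw]] := merge_exists b (leqnn (size p1 + size p2)).
have Pw := shuffle_perm Hw.
have Pv : perm_eq (map snd w) (map snd p1 ++ map snd p2) by rewrite -map_cat perm_map.
have D12 y : y \in map snd p1 -> y \notin map snd p2.
  move=> y1; apply/negP => /F2; by rewrite !mem_cat y1 !orbT.
have S1 y : y \in map snd p1 -> y \notin S by move=> /F1; rewrite mem_cat negb_or => /andP[].
have S2 y : y \in map snd p2 -> y \notin S by move=> /F2; rewrite mem_cat negb_or => /andP[].
exists w, (comb o m1 m2); split; split.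
- move=> y; rewrite (perm_mem Pv) mem_cat => /orP[/F1 //|/F2].
  by rewrite !mem_cat !negb_or => /and3P[-> ->].
- rewrite (perm_uniq Pv) cat_uniq U1 U2 /= andbT; apply/hasPn => y y2.
  by apply/negP => y1; move: (D12 y y1); rewrite y2.
- move=> y; rewrite fv_comb mem_cat (perm_mem Pv) mem_cat => /orP[/FV1|/FV2];
    case/orP => ->; by rewrite ?orbT.
- apply: leq_trans Cw _; case: (o) => /=; rewrite geq_max !leq_max C1 C2 ?orbT //.
- rewrite (permP Pw) count_cat NE1 NE2; by case: (o).
- rewrite (permP Pw) count_cat NA1 NA2; by case: (o).
- move=> R T Pi T0 HT HPi.
  rewrite (eval_shuffle o Hw T0 HT) //.
  + by rewrite EV1 // EV2 //; case: (o).
  + move=> y y1; rewrite D12 // andbT; apply/negP => /FV2 /orP[y2|yS].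
      by move: (D12 y y1); rewrite y2.
    by move: (S1 y y1); rewrite yS.
  + move=> y y2; apply/negP => /FV1 /orP[y1|yS].
      by move: (D12 y y1); rewrite y2.
    by move: (S2 y y2); rewrite yS.
Qed.

Lemma conv (HV : infinite_vars V) (psi : bform AP V) :
  forall b sg S A, Pre psi sg S -> exists p m, Good psi b sg S A p m.
Proof.
elim: psi => [x g IH|x g IH|g IHg h IHh|g IHg h IHh|phi].
- exact: (@conv_quant _ _ HV true x g IH).
- exact: (@conv_quant _ _ HV false x g IH).
- exact: (@conv_bin true g h IHg IHh).
- exact: (@conv_bin false g h IHg IHh).
move=> b sg S A Hpre; exists [::], (qf_ren sg phi); split; split => //.
- move=> y; rewrite fv_qf_ren => /mapP[z zin ->]; by rewrite Hpre.
- by move=> R T Pi *; rewrite /= eval_qf_ren.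
Qed.

End Conv2.

Unset Implicit Arguments.

Theorem mainTheorem5 (AP : finType) (V : eqType) (HV : infinite_vars V)
    (psi : bform AP V) :
  exists psi' : bform AP V,
    [/\ prenex psi',
        (alt_depth psi' <= (alt_depth psi).+1)%N,
        num_ex psi' = num_ex psi,
        num_all psi' = num_all psi &
        forall (R : realType) (T : set (trace AP R)) (Pi : assignment AP V R),
          T !=set0 ->
          (forall t, T t -> is_trace t) ->
          (forall x t, Pi x = Some t -> is_trace t) ->
          (forall x, x \in fv psi -> Pi x <> None) ->
          eval T psi' Pi = eval T psi Pi].
Proof.
have [p [m [[F U FV C] [NE NA EV]]]] := @conv AP V HV psi true (fun z => z) (fv psi) [::] (fun z zin => zin).
exists (build p m); split.
- exact: prenex_build.
- rewrite /alt_depth alt_build; apply: leq_trans (cost_None_le true p) _.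
  apply: leq_trans C _; exact: alt_Some_le.
- by rewrite num_ex_build.
- by rewrite num_all_build.
- move=> R T Pi T0 HT HPi _; exact: EV.
Qed.
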